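(* In the changepoint model with negative-binomial segment lengths described in the context (with success probability $q_{old}$), for $0<j\le n$ and every $q\in(0,1)$, $$\sum_{i=n-j}^\infty P(S=i,C_n=j\mid Y_{1:n}=y_{1:n})\big(r\ln q+i\ln(1-q)\big)=\tilde c_{jn}\,r\ln q+\tilde c_{jn}\,\frac{\sum_{\ell=n-j}^\infty\ell\,\mathrm{NB}(\ell;q_{old},r)}{\sum_{\ell=n-j}^\infty\mathrm{NB}(\ell;q_{old},r)}\,\ln(1-q).$$
   Context: Let $\mathrm{NB}(\ell;q,r)=\binom{r-1+\ell}{\ell}q^r(1-q)^\ell$ ($\ell=0,1,2,\dots$) be the negative binomial probability mass function with success probability $q\in(0,1)$ and number of successes $r\in\mathbb N_{\ge1}$. Model (with $q_{old}\in(0,1)$): fix $n\ge1$ and data $y_1,\dots,y_n$; $(\mathbb X,\mathcal X)$, $(\mathbb Y,\mathcal Y)$ standard Borel, $\psi$ $\sigma$-finite on $\mathbb Y$, $\mathcal J$ a probability measure on $\mathbb X$. Let $q_{0i}\in[0,1]$ ($i\ge1$) be arbitrary and for $0<j<i$ let $q_{ji}=\sum_{\ell\ge i-j}\mathrm{NB}(\ell;q_{old},r)/\sum_{\ell\ge i-j-1}\mathrm{NB}(\ell;q_{old},r)$. The changepoint process $(C_i)_{i\ge1}$, $C_i\in\{0,\dots,i\}$, is a Markov chain with $P(C_1=0)=q_{01}$, $P(C_1=1)=1-q_{01}$, and for $i\ge2$: $P(C_i=j\mid C_{i-1}=j)=q_{ji}$, $P(C_i=i\mid C_{i-1}=j)=1-q_{ji}$;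 it is defined for all $i\ge1$. For $i=1,\dots,n$: $X_1\sim\mathcal J$; for $i\ge2$, $X_i\sim\mathcal J$ (fresh) if $C_i=i$ and $X_i=X_{i-1}$ if $C_i<i$; $Y_i$ depends on all other variables only through $X_i$ with density $p(Y_i=y\mid X_i=x)$ w.r.t. $\psi$; given $C_n$, the future chain $(C_k)_{k>n}$ is independent of $X_{1:n},Y_{1:n},C_{1:n-1}$. Assume $\int\prod_{\ell=j}^ip(Y_\ell=y_\ell\mid X_\ell=x)\mathcal J(dx)>0$ for $0<j\le i\le n$. Let $\tau=\min\{k>n:C_k=k\}$ and $S=\tau-1-C_n$. Let $\tilde c_{jn}=P(C_n=j\mid Y_{1:n}=y_{1:n})$. *)

(* Defs.v *)
From HB Require Import structures.
From mathcomp Require Import all_boot all_order all_algebra.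
From mathcomp Require Import all_classical all_reals all_analysis.
Set Implicit Arguments. Unset Strict Implicit. Unset Printing Implicit Defensive.
Import Order.TTheory GRing.Theory Num.Theory.
Import numFieldNormedType.Exports.
Local Open Scope classical_set_scope.
Local Open Scope ring_scope.

Section Changepoint.
Variable R : realType.

Definition NB (l : nat) (q : R) (r : nat) : R :=
  ('C(r.-1 + l, l))%:R * q ^+ r * (1 - q) ^+ l.

Definition tailNB (q : R) (r m : nat) : R :=
  limn (fun N => \sum_(m <= l < N) NB l q r).

Definition tailMeanNB (q : R) (r m : nat) : R :=
  limn (fun N => \sum_(m <= l < N) l%:R * NB l q r).

(* survival probability q_{ji}; q0 gives the arbitrary q_{0i} *)
Definition qsurv (q0 : nat -> R) (qold : R) (r : nat) (j i : nat) : R :=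
  if j == 0%N then q0 i
  else tailNB qold r (i - j) / tailNB qold r (i - j).-1.

(* transition probability P(C_i = j' | C_{i-1} = j) *)
Definition trans (q0 : nat -> R) (qold : R) (r : nat) (j j' i : nat) : R :=
  if (j < i)%N then
    (if j' == j then qsurv q0 qold r j i
     else if j' == i then 1 - qsurv q0 qold r j i else 0)
  else 0.

Definition init1 (q0 : nat -> R) (c : nat) : R :=
  if c == 0%N then q0 1%N else if c == 1%N then 1 - q0 1%N else 0.

(* a changepoint path (C_1, ..., C_n) is encoded as t : n.-tuple 'I_n.+1 ;
   cv t i = C_i for 1 <= i <= n *)
Definition cv (n : nat) (t : n.-tuple 'I_n.+1) (i : nat) : nat :=
  nat_of_ord (nth ord0 t i.-1).

Definition pathP (q0 : nat -> R) (qold : R) (r n : nat) (t : n.-tuple 'I_n.+1) : R :=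
  init1 q0 (cv t 1) *
  \prod_(2 <= i < n.+1) trans q0 qold r (cv t i.-1) (cv t i) i.

Definition segInt dX (X : measurableType dX) (Y : Type)
  (J : probability X R) (p : Y -> X -> R) (y : nat -> Y) (a b : nat) : \bar R :=
  (\int[J]_x (\prod_(a <= l < b.+1) p (y l) x)%:E)%E.

(* density of Y_{1:n} = y_{1:n} given C_{1:n} = t: product over the segments
   of the path (a segment ends at i when i = n or C_{i+1} = i+1; the segment
   ending at i starts at max(C_i, 1)), each segment having its own fresh
   X ~ J integrated out *)
Definition lik dX (X : measurableType dX) (Y : Type)
  (J : probability X R) (p : Y -> X -> R) (y : nat -> Y)
  (n : nat) (t : n.-tuple 'I_n.+1) : R :=
  \prod_(1 <= i < n.+1 | (i == n) || (cv t i.+1 == i.+1))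
     fine (segInt J p y (maxn (cv t i) 1) i).

Definition jointP dX (X : measurableType dX) (Y : Type)
  (J : probability X R) (p : Y -> X -> R) (y : nat -> Y)
  (q0 : nat -> R) (qold : R) (r n : nat) (t : n.-tuple 'I_n.+1) : R :=
  pathP q0 qold r t * lik J p y t.

Definition margY dX (X : measurableType dX) (Y : Type)
  (J : probability X R) (p : Y -> X -> R) (y : nat -> Y)
  (q0 : nat -> R) (qold : R) (r n : nat) : R :=
  \sum_(t : n.-tuple 'I_n.+1) jointP J p y q0 qold r t.

Definition ctilde dX (X : measurableType dX) (Y : Type)
  (J : probability X R) (p : Y -> X -> R) (y : nat -> Y)
  (q0 : nat -> R) (qold : R) (r n j : nat) : R :=
  (\sum_(t : n.-tuple 'I_n.+1 | cv t n == j) jointP J p y q0 qold r t)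
  / margY J p y q0 qold r n.

(* P(S = i | C_n = j) for the future chain (C_k)_{k > n}:
   S = i  iff  C_k = j for n < k <= j+i and C_{j+i+1} = j+i+1,
   which requires i >= n - j. *)
Definition futP (q0 : nat -> R) (qold : R) (r n j i : nat) : R :=
  if (n - j <= i)%N then
    (\prod_(n.+1 <= k < (j + i).+1) trans q0 qold r j j k) *
    trans q0 qold r j (j + i).+1 (j + i).+1
  else 0.

Definition condSC dX (X : measurableType dX) (Y : Type)
  (J : probability X R) (p : Y -> X -> R) (y : nat -> Y)
  (q0 : nat -> R) (qold : R) (r n j i : nat) : R :=
  (\sum_(t : n.-tuple 'I_n.+1 | cv t n == j)
      jointP J p y q0 qold r t * futP q0 qold r n j i)
  / margY J p y q0 qold r n.

End Changepoint.

(* Main.v *)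
Require Import Defs.
From HB Require Import structures.
From mathcomp Require Import all_boot all_order all_algebra.
From mathcomp Require Import all_classical all_reals all_analysis.
From mathcomp Require Import ring lra zify.
Import Order.TTheory GRing.Theory Num.Theory.
Import numFieldNormedType.Exports.
Local Open Scope classical_set_scope.
Local Open Scope ring_scope.

Module Helpers.
Set Implicit Arguments. Unset Strict Implicit. Unset Printing Implicit Defensive.

Lemma geo_bound (R : realFieldType) (x B T : R) : 0 <= x < 1 ->
  T <= B + x * T -> T <= B / (1 - x).
Proof.
move=> /andP[x0 x1] h; rewrite ler_pdivlMr ?subr_gt0 //.
rewrite mulrBr mulr1; rewrite mulrC; lra.
Qed.

Definition Tk (R : ringType) (x : R) k N := \sum_(l < N) ('C(k + l, l))%:R * x ^+ l.

Lemma Tk_mono (R : realFieldType) (x : R) k n : 0 <= x -> Tk x k n <= Tk x k n.+1.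
Proof. by move=> x0; rewrite /Tk big_ord_recr /= lerDl mulr_ge0 // exprn_ge0. Qed.

Lemma Tk_rec (R : realFieldType) (x : R) k n :
  Tk x k.+1 n.+1 = Tk x k n.+1 + x * Tk x k.+1 n.
Proof.
rewrite /Tk big_ord_recl /= addn0 bin0 [X in _ = X + _]big_ord_recl /= addn0 bin0 -addrA; congr (_ + _).
under eq_bigr => i _ do rewrite /bump /= add1n addnS binS natrD mulrDl.
rewrite big_split /=; congr (_ + _).
  by apply: eq_bigr => i _; rewrite /bump /= add1n addnS addSn.
rewrite big_distrr /=; apply: eq_bigr => i _; rewrite exprS mulrCA; congr (_ * _); rewrite addSn -addnS //.
Qed.

Lemma Tk0_rec (R : realFieldType) (x : R) n :
  Tk x 0 n.+1 = 1 + x * Tk x 0 n.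
Proof.
rewrite /Tk big_ord_recl /= add0n binn mul1r expr0; congr (_ + _).
rewrite big_distrr /=; apply: eq_bigr => i _.
by rewrite /bump /= !add0n !binn !mul1r exprS.
Qed.

Lemma binbound (R : realFieldType) (x : R) k : 0 <= x < 1 -> forall N,
  Tk x k N <= ((1 - x)^-1) ^+ k.+1.
Proof.
move=> hx; have /andP[x0 x1] := hx.
elim: k => [|k IH] N.
  rewrite expr1 -[X in _ <= X]mul1r; apply: geo_bound => //.
  case: N => [|n]; first by rewrite /Tk big_ord0 mulr0 addr0.
  by rewrite {1}Tk0_rec lerD2l; apply: ler_wpM2l => //; apply: Tk_mono.
rewrite exprS mulrC; apply: geo_bound => //.
case: N => [|n]; first by rewrite /Tk big_ord0 mulr0 addr0 exprn_ge0 // invr_ge0 subr_ge0 ltW.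
rewrite {1}Tk_rec; apply: lerD; first exact: IH.
by apply: ler_wpM2l => //; apply: Tk_mono.
Qed.

Section Tail.
Variable R : realType.
Variable f : nat -> R.
Hypothesis f0 : forall l, 0 <= f l.
Variable B : R.
Hypothesis fB : forall N, \sum_(l < N) f l <= B.

Lemma tail_le m N : \sum_(m <= l < N) f l <= B.
Proof.
case: (leqP m N) => h.
  apply: le_trans (fB N); rewrite -(big_mkord xpredT) (big_cat_nat (leq0n m) h) /= lerDr.
  by apply: sumr_ge0 => i _; apply: f0.
rewrite big_geq; last by apply: ltnW.
have := fB 0; rewrite big_ord0; apply.
Qed.

Lemma tail_cvg m : cvgn (fun N => \sum_(m <= l < N) f l).
Proof.
apply: nondecreasing_is_cvgn.
  apply/nondecreasing_seqP => N; case: (leqP m N) => h.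
    by rewrite big_nat_recr //= lerDl; apply: f0.
  rewrite [X in X <= _]big_geq; last by apply: ltnW.
  apply: sumr_ge0 => i _; apply: f0.
by exists B => _ [N _ <-]; exact: tail_le.
Qed.

Lemma tail_cvg_to m : (fun N => \sum_(m <= l < N) f l) @ \oo --> limn (fun N => \sum_(m <= l < N) f l).
Proof. exact: tail_cvg. Qed.

Lemma tail_rec m : limn (fun N => \sum_(m <= l < N) f l) =
   f m + limn (fun N => \sum_(m.+1 <= l < N) f l).
Proof.
apply: cvg_lim => //.
have h : (fun N => f m + \sum_(m.+1 <= l < N) f l) @ \oo --> f m + limn (fun N => \sum_(m.+1 <= l < N) f l).
  apply: cvgD; [exact: cvg_cst | exact: tail_cvg_to].
apply: cvg_trans h; apply: near_eq_cvg; near=> N.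
rewrite [RHS]big_ltn //; near: N; exact: nbhs_infty_gt.
Unshelve. all: by end_near.
Qed.

Lemma tail_ge0 m : 0 <= limn (fun N => \sum_(m <= l < N) f l).
Proof.
apply: limr_ge; first exact: tail_cvg.
by near=> N; apply: sumr_ge0 => i _; apply: f0.
Unshelve. all: by end_near.
Qed.

End Tail.

Lemma bin_mean k l : (l * 'C(k + l, l) <= k.+1 * 'C(k.+1 + l, l))%N.
Proof.
have e := mul_bin_down (k.+1 + l) l.
rewrite addSn /= -addSn addnK in e.
rewrite -e; apply: leq_mul => //; exact: leq_addl.
Qed.

Section NBfacts.
Variable R : realType.
Variable qo : R.
Hypothesis hqo : 0 < qo < 1.
Variable r : nat.

Lemma NB_gt0 l : 0 < NB l qo r.
Proof.
have /andP[h0 h1] := hqo.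
rewrite /NB mulr_gt0 // ?mulr_gt0 // ?exprn_gt0 // ?subr_gt0 // ltr0n bin_gt0; exact: leq_addl.
Qed.

Lemma NB_ge0 l : 0 <= NB l qo r.
Proof. exact/ltW/NB_gt0. Qed.

Lemma NBl_ge0 l : 0 <= l%:R * NB l qo r.
Proof. by apply: mulr_ge0; [exact: ler0n | exact: NB_ge0]. Qed.

Lemma NB_bound N : \sum_(l < N) NB l qo r <= qo ^+ r * ((1 - (1 - qo))^-1) ^+ (r.-1).+1.
Proof.
have /andP[h0 h1] := hqo.
have -> : \sum_(l < N) NB l qo r = qo ^+ r * Tk (1 - qo) r.-1 N.
  rewrite /Tk big_distrr /=; apply: eq_bigr => l _; rewrite /NB mulrAC mulrC //.
apply: ler_wpM2l; first by apply: exprn_ge0; apply: ltW.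
apply: binbound; apply/andP; split; [rewrite subr_ge0; exact: ltW | rewrite ltrBlDr ltrDl //].
Qed.

Lemma NBl_bound N : \sum_(l < N) l%:R * NB l qo r <=
  (r.-1).+1%:R * (qo ^+ r * ((1 - (1 - qo))^-1) ^+ (r.-1).+2).
Proof.
have /andP[h0 h1] := hqo.
have hx : 0 <= 1 - qo < 1.
  by apply/andP; split; [rewrite subr_ge0; exact: ltW | rewrite ltrBlDr ltrDl //].
apply: (@le_trans _ _ ((r.-1).+1%:R * (qo ^+ r * Tk (1 - qo) (r.-1).+1 N))); last first.
  apply: ler_wpM2l; first exact: ler0n.
  apply: ler_wpM2l; first by apply: exprn_ge0; apply: ltW.
  exact: binbound.
rewrite /Tk !big_distrr /=; apply: ler_sum => l _.
rewrite /NB !mulrA -natrM.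
have -> : (r.-1).+1%:R * qo ^+ r * 'C((r.-1).+1 + l, l)%:R * (1 - qo) ^+ l =
   ((r.-1).+1 * 'C((r.-1).+1 + l, l))%:R * qo ^+ r * (1 - qo) ^+ l.
  by rewrite natrM; ring.
apply: ler_wpM2r; first by apply: exprn_ge0; rewrite subr_ge0; apply: ltW.
apply: ler_wpM2r; first by apply: exprn_ge0; apply: ltW.
rewrite ler_nat; exact: bin_mean.
Qed.

End NBfacts.
End Helpers.
Import Helpers.

Theorem mainTheorem15 (R : realType)
  (dX dY : measure_display) (X : measurableType dX) (Y : measurableType dY)
  (psi : {measure set Y -> \bar R}) (psi_sf : sigma_finite [set: Y] psi)
  (J : probability X R)
  (p : Y -> X -> R)
  (p_ge0 : forall yy x, 0 <= p yy x)
  (p_mx : forall yy, measurable_fun [set: X] (p yy))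
  (p_my : forall x, measurable_fun [set: Y] (fun yy => p yy x))
  (p_dens : forall x, (\int[psi]_yy (p yy x)%:E = 1)%E)
  (qold : R) (hqold : 0 < qold < 1) (r : nat) (hr : (0 < r)%N)
  (q0 : nat -> R) (hq0 : forall i, 0 <= q0 i <= 1)
  (n : nat) (hn : (0 < n)%N) (y : nat -> Y)
  (hpos : forall j i, (0 < j)%N -> (j <= i)%N -> (i <= n)%N ->
     (0 < segInt J p y j i < +oo)%E)
  (j : nat) (hj : (0 < j <= n)%N) (q : R) (hq : 0 < q < 1) :
  (fun N => \sum_(n - j <= i < N)
      condSC J p y q0 qold r n j i * (r%:R * ln q + i%:R * ln (1 - q)))
  @ \oo -->
  ctilde J p y q0 qold r n j * r%:R * ln q
  + ctilde J p y q0 qold r n j *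
    (tailMeanNB qold r (n - j) / tailNB qold r (n - j))
    * ln (1 - q).
Proof.
have /andP[j0 jn] := hj.
set m := (n - j)%N.
pose u := fun l => NB l qold r.
pose v := fun l => l%:R * NB l qold r.
have u0 : forall l, 0 <= u l by move=> l; exact: (NB_ge0 hqold).
have v0 : forall l, 0 <= v l by move=> l; exact: (NBl_ge0 hqold).
have uB := NB_bound hqold r.
have vB := NBl_bound hqold r.
pose T k := tailNB qold r k.
have Trec : forall k, T k = NB k qold r + T k.+1.
  by move=> k; exact: (tail_rec u0 uB k).
have Tge0 : forall k, 0 <= T k by move=> k; exact: (tail_ge0 u0 uB k).
have Tgt0 : forall k, 0 < T k.
  move=> k; rewrite Trec; apply: (lt_le_trans (NB_gt0 hqold r k)); rewrite lerDl; exact: Tge0.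
have Tn0 : forall k, T k != 0 by move=> k; rewrite gt_eqF.
have qs : forall k, (j < k)%N -> qsurv q0 qold r j k = T (k - j)%N / T (k - j).-1.
  by move=> k hk; rewrite /qsurv ifF //; apply/negbTE; rewrite -lt0n.
have tr1 : forall k, (j < k)%N -> trans q0 qold r j j k = T (k - j)%N / T (k - j).-1.
  by move=> k hk; rewrite /trans hk eqxx qs.
have prodE : forall d, \prod_(n.+1 <= k < (n + d).+1) trans q0 qold r j j k = T (m + d)%N / T m.
  elim=> [|d IH].
    by rewrite addn0 big_geq // addn0 divff.
  rewrite addnS big_nat_recr /=; last by lia.
  rewrite IH tr1; last by lia.
  have -> : ((n + d).+1 - j)%N = (m + d).+1 by rewrite /m; lia.
  by rewrite /= addnS; field; rewrite !Tn0.
have futE : forall i, (m <= i)%N -> futP q0 qold r n j i = NB i qold r / T m.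
  move=> i hi; rewrite /futP hi.
  have -> : (j + i)%N = (n + (i - m))%N by rewrite /m; lia.
  rewrite prodE /trans.
  have -> : (j < (n + (i - m)).+1)%N by lia.
  have -> : ((n + (i - m)).+1 == j) = false by apply/eqP; lia.
  rewrite eqxx qs; last by lia.
  have -> : ((n + (i - m)).+1 - j)%N = i.+1 by rewrite /m; lia.
  have -> : (m + (i - m))%N = i by lia.
  by rewrite /= {1 2}Trec; field; rewrite -Trec !Tn0.
have cs : forall i, condSC J p y q0 qold r n j i =
    ctilde J p y q0 qold r n j * futP q0 qold r n j i.
  by move=> i; rewrite /condSC /ctilde -big_distrl /= mulrAC.
set c := ctilde J p y q0 qold r n j.
set A := r%:R * ln q.
set Lq := ln (1 - q).
have -> : (fun N => \sum_(m <= i < N) condSC J p y q0 qold r n j i * (r%:R * ln q + i%:R * ln (1 - q)))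
   = (fun N => (c / T m * A) * (\sum_(m <= l < N) u l) + (c / T m * Lq) * (\sum_(m <= l < N) v l)).
  apply/funext => N; rewrite !big_distrr -big_split /=.
  apply: eq_big_nat => i /andP[hi _]; rewrite cs futE // /u /v /A /Lq.
  by rewrite /c; field; rewrite !Tn0.
have -> : c * r%:R * ln q + c * (tailMeanNB qold r m / tailNB qold r m) * ln (1 - q)
   = (c / T m * A) * T m + (c / T m * Lq) * tailMeanNB qold r m.
  by rewrite /A /Lq /T /c; field; have := Tn0 m; rewrite /T => ->.
apply: cvgD; apply: cvgMl_tmp.
  exact: (tail_cvg_to u0 uB (m:=m)).
exact: (tail_cvg_to v0 vB (m:=m)).
Qed.
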